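(* Let $p\ge 2$, $0<T\le\infty$. (Direct part.) Let $(a_i(t))_{i\ge0}$, $t\in[0,T)$, be a solution of $$\dot a_i=a_i\Big(\prod_{j=1}^{p}a_{i+j}-\prod_{j=1}^{p}a_{i-j}\Big),\quad i\in\mathbb Z_+,\ a_l=0\ (l<0),$$ with $a_i(t)\neq 0$ and $(a_i(t))_i\in l_\infty$, and set $b_i(t)=a_i(t)a_{i+1}(t)\cdots a_{i+p-1}(t)$ (the Miura map; $(b_i)$ then solves $\dot b_i=b_i(\sum_{j=1}^p b_{i+j}-\sum_{j=1}^p b_{i-j})$, $b_l=0$ for $l<0$). Let $S^l_k(t)=(L1(t)^k)_{l-1,0}$ and $\tilde S^l_k(t)=(L2(t)^k)_{0,l-1}$, $l=1,\dots,p$, $k\ge 0$, be the moments of the matrices $L1(t)$ built from $(a_i(t))$ and $L2(t)$ built from $(b_i(t))$. Then $$\frac{S^l_k(t)}{S^l_{l-1}(t)}=\tilde S^l_k(t),\qquad l=1,\dots,p,\ k\in\mathbb Z_+.$$ (Converse part.) Let $(b_i(t))_{i\ge0}$, $t\in[0,T)$, be a solution of $\dot b_i=b_i(\sum_{j=1}^p b_{i+j}-\sum_{j=1}^p b_{i-j})$, $b_l=0$ for $l<0$, with $b_i(t)\ne 0$, $(b_i(t))_i\in l_\infty$. Choose nonzero $a_0(0),\dots,a_{p-2}(0)\in\mathbb C$ and define $a_i(t)=a_i(0)\exp\big(\int_0^t b_{i+1}(\tau)d\tau\big)$ for $i=0,\dots,p-2$ and recursively $a_i(t)=b_{i-p+1}(t)/(a_{i-p+1}(t)\cdots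 a_{i-1}(t))$ for $i\ge p-1$. Then, with $S^l_k(t)$ the moments of $L1(t)$ built from these $a_i(t)$ and $\tilde S^l_k(t)$ those of $L2(t)$ built from $b_i(t)$, one has for all $k\in\mathbb Z_+$ $$S^1_k(t)=\tilde S^1_k(t),\qquad S^l_k(t)=a_0(0)\cdots a_{l-2}(0)\,\exp\Big(\int_0^t\big(\tilde S^l_{l+p}(\tau)-\tilde S^1_{p+1}(\tau)\big)d\tau\Big)\tilde S^l_k(t),\quad l=2,\dots,p,$$ and $S(t)=(S^1_k(t),\dots,S^p_k(t))_k$ is the moment sequence of the matrix $L1(t)$ associated with a solution of the first ($a$-)system.
   Context: For a sequence $(a_i)$, $L1$ is the infinite matrix (indices $\ge0$) with $(L1)_{i,i+p}=1$, $(L1)_{i+1,i}=a_i$ for $i\ge0$, other entries zero. For $(b_i)$, $L2$ is the infinite matrix with $(L2)_{i,i+1}=1$, $(L2)_{i+p,i}=b_i$ for $i\ge 0$, other entries zero. Matrix powers are ordinary products of these banded matrices. *)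

(* Defs.v *)
From Stdlib Require Import Reals.
From Coquelicot Require Import Coquelicot.
Open Scope R_scope.

Definition cexp (z : C) : C :=
  (exp (Re z) * cos (Im z), exp (Re z) * sin (Im z)).

Definition CRInt (f : R -> C) (a b : R) : C :=
  (RInt (fun s => Re (f s)) a b, RInt (fun s => Im (f s)) a b).

Fixpoint cprod (n : nat) (f : nat -> C) : C :=
  match n with
  | O => RtoC 1
  | S n => Cmult (cprod n f) (f n)
  end.

Definition inI (T : Rbar) (t : R) : Prop := 0 <= t /\ Rbar_lt t T.

(* f has derivative l at t relative to the interval [0,T)
   (two-sided in the interior, right derivative at t = 0) *)
Definition deriv_in (T : Rbar) (f : R -> C) (t : R) (l : C) : Prop :=
  filterlim (fun s => Cdiv (Cminus (f s) (f t)) (RtoC (s - t)))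
    (within (fun s => inI T s /\ s <> t) (locally t)) (locally l).

(* value a_{i-j} with the convention a_l = 0 for l < 0 *)
Definition back (x : nat -> C) (i j : nat) : C :=
  if (j <=? i)%nat then x (i - j)%nat else RtoC 0.

Definition rhsA (p : nat) (x : nat -> C) (i : nat) : C :=
  Cmult (x i) (Cminus (cprod p (fun j => x (i + S j)%nat))
                      (cprod p (fun j => back x i (S j)))).

Definition rhsB (p : nat) (y : nat -> C) (i : nat) : C :=
  Cmult (y i) (Cminus (sum_n (fun j => y (i + S j)%nat) (p - 1))
                      (sum_n (fun j => back y i (S j)) (p - 1))).

Definition solA (p : nat) (T : Rbar) (a : nat -> R -> C) : Prop :=
  forall i t, inI T t -> deriv_in T (a i) t (rhsA p (fun n => a n t) i).

Definition solB (p : nat) (T : Rbar) (b : nat -> R -> C) : Prop :=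
  forall i t, inI T t -> deriv_in T (b i) t (rhsB p (fun n => b n t) i).

Definition bounded_seq (x : nat -> C) : Prop :=
  exists M : R, forall i, Cmod (x i) <= M.

Definition miura (p : nat) (a : nat -> R -> C) (i : nat) (t : R) : C :=
  cprod p (fun j => a (i + j)%nat t).

Definition L1 (p : nat) (x : nat -> C) (i j : nat) : C :=
  if (j =? i + p)%nat then RtoC 1
  else if (i =? j + 1)%nat then x j else RtoC 0.

Definition L2 (p : nat) (y : nat -> C) (i j : nat) : C :=
  if (j =? i + 1)%nat then RtoC 1
  else if (i =? j + p)%nat then y j else RtoC 0.

(* Powers of an infinite matrix L whose column j is supported in rows
   0..j+p (true for L1 and L2); the sum is then the ordinary
   matrix product (L^(k+1))_{i,j} = sum_m (L^k)_{i,m} L_{m,j}. *)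
Fixpoint mpow (p : nat) (L : nat -> nat -> C) (k i j : nat) : C :=
  match k with
  | O => if (i =? j)%nat then RtoC 1 else RtoC 0
  | S k => sum_n (fun m => Cmult (mpow p L k i m) (L m j)) (j + p)%nat
  end.

Definition S1 (p : nat) (x : nat -> C) (l k : nat) : C :=
  mpow p (L1 p x) k (l - 1)%nat 0%nat.
Definition S2 (p : nat) (y : nat -> C) (l k : nat) : C :=
  mpow p (L2 p y) k 0%nat (l - 1)%nat.

(* Main.v *)
Require Import Defs.
From Stdlib Require Import Reals Lia Lra.
From Coquelicot Require Import Coquelicot.
Open Scope R_scope.

Lemma sum_n_zero (f : nat -> C) N : (forall m, (m <= N)%nat -> f m = RtoC 0) -> sum_n f N = RtoC 0.
Proof.
  induction N; intros H.
  - rewrite sum_O. apply H; lia.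
  - rewrite sum_Sn, IHN. rewrite H by lia. change (Cplus (RtoC 0) (RtoC 0) = RtoC 0). ring.
    intros; apply H; lia.
Qed.

Lemma sum_n_one (f : nat -> C) N m0 : (m0 <= N)%nat ->
  (forall m, m <> m0 -> f m = RtoC 0) -> sum_n f N = f m0.
Proof.
  intros Hm H. induction N.
  - assert (m0 = 0)%nat by lia. subst. now rewrite sum_O.
  - rewrite sum_Sn. destruct (Nat.eq_dec m0 (S N)).
    + subst. rewrite sum_n_zero. change (Cplus (RtoC 0) (f (S N)) = f (S N)). ring.
      intros; apply H; lia.
    + rewrite IHN by lia. rewrite (H (S N)) by lia. change (Cplus (f m0) (RtoC 0) = f m0). ring.
Qed.

Lemma sum_n_ext_le (f g : nat -> C) N : (forall m, (m <= N)%nat -> f m = g m) -> sum_n f N = sum_n g N.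
Proof. intros H. apply sum_n_ext_loc. intros; apply H; lia. Qed.

Lemma sum_n_Cmult_l (a : C) (f : nat -> C) N : sum_n (fun m => Cmult a (f m)) N = Cmult a (sum_n f N).
Proof. apply (sum_n_mult_l (K:=C_Ring)). Qed.

Lemma sum_n_Cmult_r (a : C) (f : nat -> C) N : sum_n (fun m => Cmult (f m) a) N = Cmult (sum_n f N) a.
Proof. apply (sum_n_mult_r (K:=C_Ring)). Qed.

Lemma sum_n_Cplus (f g : nat -> C) N : sum_n (fun m => Cplus (f m) (g m)) N = Cplus (sum_n f N) (sum_n g N).
Proof. apply (sum_n_plus (G:=C_AbelianMonoid)). Qed.

Section Mat.
Variable p : nat.
Variable L : nat -> nat -> C.
Hypothesis HC : forall m j, (j + p < m)%nat -> L m j = RtoC 0.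

Lemma mpow_col k : forall i j, (j + k * p < i)%nat -> mpow p L k i j = RtoC 0.
Proof.
  induction k; intros i j H; simpl.
  - destruct (Nat.eqb_spec i j); [lia|reflexivity].
  - apply sum_n_zero. intros m Hm. rewrite IHk by lia. change (Cmult (RtoC 0) (L m j) = RtoC 0). ring.
Qed.

Lemma mpow_S_ext k i j N : (j + p <= N)%nat ->
  mpow p L (S k) i j = sum_n (fun m => Cmult (mpow p L k i m) (L m j)) N.
Proof.
  intros H. replace N with (j + p + (N - (j+p)))%nat by lia.
  generalize (N - (j+p))%nat. intros d. induction d.
  - simpl. now rewrite Nat.add_0_r.
  - rewrite Nat.add_succ_r, sum_Sn, <- IHd. rewrite HC by lia.
    change (mpow p L (S k) i j = Cplus (mpow p L (S k) i j) (Cmult (mpow p L k i (S (j + p + d))) (RtoC 0))). ring.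
Qed.

Hypothesis HR : forall i m, (i + p < m)%nat -> L i m = RtoC 0.

Lemma mpow_assoc k : forall i j N, (i + p <= N)%nat ->
  mpow p L (S k) i j = sum_n (fun n => Cmult (L i n) (mpow p L k n j)) N.
Proof.
  induction k; intros i j N HN.
  - simpl. transitivity (L i j).
    + destruct (Compare_dec.le_lt_dec i (j+p)).
      * rewrite (sum_n_one _ _ i); [| lia |].
        2:{ intros m Hm. destruct (Nat.eqb_spec i m); [lia|]. change (Cmult (RtoC 0) (L m j) = RtoC 0); ring. }
        rewrite Nat.eqb_refl. change (Cmult (RtoC 1) (L i j) = L i j). ring.
      * rewrite HC by lia. apply sum_n_zero. intros m Hm. destruct (Nat.eqb_spec i m); [lia|]. change (Cmult (RtoC 0) (L m j) = RtoC 0); ring.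
    + destruct (Compare_dec.le_lt_dec j N).
      * rewrite (sum_n_one _ _ j); [| lia |].
        2:{ intros m Hm. destruct (Nat.eqb_spec m j); [lia|]. change (Cmult (L i m) (RtoC 0) = RtoC 0); ring. }
        rewrite Nat.eqb_refl. change (L i j = Cmult (L i j) (RtoC 1)). ring.
      * rewrite HR by lia. symmetry. apply sum_n_zero. intros m Hm. destruct (Nat.eqb_spec m j); [lia|]. change (Cmult (L i m) (RtoC 0) = RtoC 0); ring.
  - change (mpow p L (S (S k)) i j) with (sum_n (fun m => Cmult (mpow p L (S k) i m) (L m j)) (j + p)).
    rewrite (sum_n_ext _ (fun m => sum_n (fun n => Cmult (L i n) (Cmult (mpow p L k n m) (L m j))) N)).
    2:{ intros m. rewrite (IHk i m N HN). rewrite <- sum_n_Cmult_r. apply sum_n_ext. intros n.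
        change (Cmult (Cmult (L i n) (mpow p L k n m)) (L m j) = Cmult (L i n) (Cmult (mpow p L k n m) (L m j))). ring. }
    rewrite sum_n_switch. apply sum_n_ext. intros n. rewrite sum_n_Cmult_l. reflexivity.
Qed.
End Mat.

Lemma cprod_add (x : nat -> C) j n : cprod (j + n) x = Cmult (cprod j x) (cprod n (fun r => x (j + r)%nat)).
Proof.
  induction n; simpl.
  - rewrite Nat.add_0_r. change (cprod j x = Cmult (cprod j x) (RtoC 1)). ring.
  - rewrite Nat.add_succ_r. simpl. rewrite IHn. change (Cmult (Cmult (cprod j x) (cprod n (fun r => x (j + r)%nat))) (x (j+n)%nat) = Cmult (cprod j x) (Cmult (cprod n (fun r => x (j + r)%nat)) (x (j + n)%nat))). ring.
Qed.

Lemma cprod_nz n (x : nat -> C) : (forall m, (m < n)%nat -> x m <> RtoC 0) -> cprod n x <> RtoC 0.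
Proof.
  induction n; intros H; simpl.
  - intro E. apply RtoC_inj in E. lra.
  - apply Cmult_neq_0. apply IHn; intros; apply H; lia. apply H; lia.
Qed.

Lemma cprod_ext n (f g : nat -> C) : (forall m, (m < n)%nat -> f m = g m) -> cprod n f = cprod n g.
Proof. induction n; intros H; simpl; auto. rewrite IHn, H; auto. Qed.

Lemma cprod_zero n (f : nat -> C) m : (m < n)%nat -> f m = RtoC 0 -> cprod n f = RtoC 0.
Proof.
  induction n; intros Hm Hf; [lia|]. simpl. destruct (Nat.eq_dec m n).
  - subst. rewrite Hf. change (Cmult (cprod n f) (RtoC 0) = RtoC 0). ring.
  - rewrite IHn by (try assumption; lia). change (Cmult (RtoC 0) (f n) = RtoC 0). ring.
Qed.

Section L12.
Variable p : nat.
Hypothesis Hp : (1 <= p)%nat.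

Lemma L1_HC x : forall m j, (j + p < m)%nat -> L1 p x m j = RtoC 0.
Proof. intros m j H. unfold L1. destruct (Nat.eqb_spec j (m+p)); [lia|]. destruct (Nat.eqb_spec m (j+1)); [lia|]. auto. Qed.
Lemma L1_HR x : forall i m, (i + p < m)%nat -> L1 p x i m = RtoC 0.
Proof. intros m j H. unfold L1. destruct (Nat.eqb_spec j (m+p)); [lia|]. destruct (Nat.eqb_spec m (j+1)); [lia|]. auto. Qed.
Lemma L2_HC y : forall m j, (j + p < m)%nat -> L2 p y m j = RtoC 0.
Proof. intros m j H. unfold L2. destruct (Nat.eqb_spec j (m+1)); [lia|]. destruct (Nat.eqb_spec m (j+p)); [lia|]. auto. Qed.

Lemma L2_split y m j : L2 p y m j =
  Cplus (if (j =? m + 1)%nat then RtoC 1 else RtoC 0) (if (m =? j + p)%nat then y j else RtoC 0).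
Proof.
  unfold L2. destruct (Nat.eqb_spec j (m+1)); destruct (Nat.eqb_spec m (j+p)); try lia; ring.
Qed.

Lemma mpow2_rec y k i j : mpow p (L2 p y) (S k) i j =
  Cplus (match j with O => RtoC 0 | S j' => mpow p (L2 p y) k i j' end)
        (Cmult (mpow p (L2 p y) k i (j + p)) (y j)).
Proof.
  change (mpow p (L2 p y) (S k) i j) with (sum_n (fun m => Cmult (mpow p (L2 p y) k i m) (L2 p y m j)) (j + p)).
  rewrite (sum_n_ext _ (fun m => Cplus (Cmult (mpow p (L2 p y) k i m) (if (j =? m + 1)%nat then RtoC 1 else RtoC 0))
                                      (Cmult (mpow p (L2 p y) k i m) (if (m =? j + p)%nat then y j else RtoC 0)))).
  2:{ intros m. rewrite L2_split. change (Cmult (mpow p (L2 p y) k i m) (Cplus (if (j =? m + 1)%nat then RtoC 1 else RtoC 0) (if (m =? j + p)%nat then y j else RtoC 0)) = Cplus (Cmult (mpow p (L2 p y) k i m) (if (j =? m + 1)%nat then RtoC 1 else RtoC 0))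
                                      (Cmult (mpow p (L2 p y) k i m) (if (m =? j + p)%nat then y j else RtoC 0))). ring. }
  rewrite sum_n_Cplus. f_equal.
  - destruct j as [|j'].
    + apply sum_n_zero. intros m _. destruct (Nat.eqb_spec 0 (m+1)); [lia|]. change (Cmult (mpow p (L2 p y) k i m) (RtoC 0) = RtoC 0). ring.
    + rewrite (sum_n_one _ _ j'); [| lia |].
      * rewrite (proj2 (Nat.eqb_eq _ _)) by lia. change (Cmult (mpow p (L2 p y) k i j') (RtoC 1) = mpow p (L2 p y) k i j'). ring.
      * intros m Hm. destruct (Nat.eqb_spec (S j') (m+1)); [lia|]. change (Cmult (mpow p (L2 p y) k i m) (RtoC 0) = RtoC 0). ring.
  - rewrite (sum_n_one _ _ (j+p)); [| lia |].
    + rewrite Nat.eqb_refl. reflexivity.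
    + intros m Hm. destruct (Nat.eqb_spec m (j+p)); [lia|]. change (Cmult (mpow p (L2 p y) k i m) (RtoC 0) = RtoC 0). ring.
Qed.

Lemma mpow2_row y k : forall i j, (i + k < j)%nat -> mpow p (L2 p y) k i j = RtoC 0.
Proof.
  induction k; intros i j H.
  - simpl. destruct (Nat.eqb_spec i j); [lia|auto].
  - rewrite mpow2_rec. destruct j as [|j']; [lia|]. rewrite !IHk by lia.
    change (Cplus (RtoC 0) (Cmult (RtoC 0) (y (S j'))) = RtoC 0). ring.
Qed.

Lemma mpow2_diag y k i : mpow p (L2 p y) k i (i + k) = RtoC 1.
Proof.
  induction k.
  - simpl. rewrite Nat.add_0_r, Nat.eqb_refl. auto.
  - rewrite mpow2_rec. rewrite Nat.add_succ_r. rewrite IHk. rewrite mpow2_row by lia.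
    change (Cplus (RtoC 1) (Cmult (RtoC 0) (y (S (i + k)))) = RtoC 1). ring.
Qed.

Lemma mpow2_Q y j : mpow p (L2 p y) (j + 1 + p) 0 j = sum_n y j.
Proof.
  induction j.
  - simpl (0 + 1 + p)%nat. rewrite mpow2_rec, sum_O. simpl (0+p)%nat.
    pose proof (mpow2_diag y p 0) as Hd; simpl (0+p)%nat in Hd; rewrite Hd. change (Cplus (RtoC 0) (Cmult (RtoC 1) (y 0%nat)) = y 0%nat). ring.
  - replace (S j + 1 + p)%nat with (S (j + 1 + p)) by lia. rewrite mpow2_rec, IHj, sum_Sn.
    replace (S j + p)%nat with (0 + (j + 1 + p))%nat by lia. rewrite mpow2_diag.
    change (Cplus (sum_n y j) (Cmult (RtoC 1) (y (S j))) = Cplus (sum_n y j) (y (S j))). ring.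
Qed.

Variables (x y : nat -> C).
Hypothesis Hy : forall j, y j = cprod p (fun r => x (j + r)%nat).

Lemma PL_swap m j : Cmult (cprod j x) (L2 p y m j) = Cmult (cprod m x) (L1 p x j m).
Proof.
  unfold L1, L2. destruct (Nat.eqb_spec j (m+1)).
  - destruct (Nat.eqb_spec m (j+p)); [lia|]. destruct (Nat.eqb_spec j (m+1)); [|lia].
    subst j. rewrite Nat.add_1_r. simpl. change (Cmult (Cmult (cprod m x) (x m)) (RtoC 1) = Cmult (cprod m x) (x m)). ring.
  - destruct (Nat.eqb_spec m (j+p)).
    + subst m. rewrite Hy, cprod_add. change (Cmult (cprod j x) (cprod p (fun r => x (j + r)%nat)) = Cmult (Cmult (cprod j x) (cprod p (fun r => x (j + r)%nat))) (RtoC 1)). ring.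
    + destruct (Nat.eqb_spec j (m+1)); [lia|]. change (Cmult (cprod j x) (RtoC 0) = Cmult (cprod m x) (RtoC 0)). ring.
Qed.

Lemma relation k : forall i j, Cmult (cprod j x) (mpow p (L2 p y) k i j) = Cmult (cprod i x) (mpow p (L1 p x) k j i).
Proof.
  induction k; intros i j.
  - simpl. destruct (Nat.eqb_spec i j); destruct (Nat.eqb_spec j i); try lia.
    + subst. reflexivity.
    + change (Cmult (cprod j x) (RtoC 0) = Cmult (cprod i x) (RtoC 0)). ring.
  - rewrite (mpow_assoc p (L1 p x) (L1_HC x) (L1_HR x) k j i (j + p)) by lia.
    change (mpow p (L2 p y) (S k) i j) with (sum_n (fun m => Cmult (mpow p (L2 p y) k i m) (L2 p y m j)) (j + p)).
    rewrite <- !sum_n_Cmult_l. apply sum_n_ext. intros m.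
    transitivity (Cmult (mpow p (L2 p y) k i m) (Cmult (cprod j x) (L2 p y m j))).
    { change (Cmult (cprod j x) (Cmult (mpow p (L2 p y) k i m) (L2 p y m j)) = Cmult (mpow p (L2 p y) k i m) (Cmult (cprod j x) (L2 p y m j))). ring. }
    rewrite PL_swap.
    transitivity (Cmult (Cmult (cprod m x) (mpow p (L2 p y) k i m)) (L1 p x j m)).
    { change (Cmult (mpow p (L2 p y) k i m) (Cmult (cprod m x) (L1 p x j m)) = Cmult (Cmult (cprod m x) (mpow p (L2 p y) k i m)) (L1 p x j m)). ring. }
    rewrite IHk.
    change (Cmult (Cmult (cprod i x) (mpow p (L1 p x) k m i)) (L1 p x j m) = Cmult (cprod i x) (Cmult (L1 p x j m) (mpow p (L1 p x) k m i))). ring.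
Qed.

Lemma S1_S2 l k : S1 p x l k = Cmult (cprod (l - 1) x) (S2 p y l k).
Proof.
  unfold S1, S2. rewrite relation. simpl (cprod 0 x). change (mpow p (L1 p x) k (l - 1) 0 = Cmult (RtoC 1) (mpow p (L1 p x) k (l - 1) 0)). ring.
Qed.

Lemma S2_diag l : S2 p y l (l - 1) = RtoC 1.
Proof. unfold S2. apply (mpow2_diag y (l-1) 0). Qed.

End L12.
Section S.
Context {T : Type} {F : (T -> Prop) -> Prop} {FF : Filter F}.
Lemma RL_mult (f g : T -> R) a b : filterlim f F (locally a) -> filterlim g F (locally b) ->
  filterlim (fun x => f x * g x) F (locally (a * b)).
Proof. intros Hf Hg. eapply filterlim_comp_2; eauto. apply (filterlim_mult (K:=R_AbsRing) a b). Qed.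
Lemma RL_plus (f g : T -> R) a b : filterlim f F (locally a) -> filterlim g F (locally b) ->
  filterlim (fun x => f x + g x) F (locally (a + b)).
Proof. intros Hf Hg. eapply filterlim_comp_2; eauto. apply (filterlim_plus (V:=R_NormedModule) a b). Qed.
Lemma RL_opp (f : T -> R) a : filterlim f F (locally a) -> filterlim (fun x => - f x) F (locally (- a)).
Proof. intros Hf. eapply filterlim_comp; eauto. apply (filterlim_opp (V:=R_NormedModule) a). Qed.
Lemma RL_inv (f : T -> R) a : a <> 0 -> filterlim f F (locally a) -> filterlim (fun x => / f x) F (locally (/ a)).
Proof. intros Ha Hf. eapply filterlim_comp; eauto. apply continuity_pt_filterlim. apply continuity_pt_inv; auto. apply continuity_pt_id. Qed.
Lemma RL_const (a : R) : filterlim (fun _ => a) F (locally a).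
Proof. apply filterlim_const. Qed.
Lemma CL_intro (f : T -> C) (l : C) : filterlim (fun x => fst (f x)) F (locally (fst l)) -> filterlim (fun x => snd (f x)) F (locally (snd l)) -> filterlim f F (locally l).
Proof.
  intros H1 H2. apply filterlim_locally. intros eps.
  apply filterlim_locally with (eps := eps) in H1. apply filterlim_locally with (eps := eps) in H2.
  generalize (filter_and _ _ H1 H2). apply filter_imp. intros x [A B]. split; auto.
Qed.
Lemma CL_fst (f : T -> C) (l : C) : filterlim f F (locally l) -> filterlim (fun x => fst (f x)) F (locally (fst l)).
Proof. intros H. apply filterlim_locally. intros eps. apply filterlim_locally with (eps := eps) in H. revert H. apply filter_imp. intros x [A B]; auto. Qed.
Lemma CL_snd (f : T -> C) (l : C) : filterlim f F (locally l) -> filterlim (fun x => snd (f x)) F (locally (snd l)).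
Proof. intros H. apply filterlim_locally. intros eps. apply filterlim_locally with (eps := eps) in H. revert H. apply filter_imp. intros x [A B]; auto. Qed.

Lemma RL_minus (f g : T -> R) a b : filterlim f F (locally a) -> filterlim g F (locally b) ->
  filterlim (fun x => f x - g x) F (locally (a - b)).
Proof. intros. apply RL_plus; auto. apply RL_opp; auto. Qed.

Lemma CL_plus (f g : T -> C) a b : filterlim f F (locally a) -> filterlim g F (locally b) ->
  filterlim (fun x => Cplus (f x) (g x)) F (locally (Cplus a b)).
Proof. intros Hf Hg. apply CL_intro; simpl; apply RL_plus; auto using CL_fst, CL_snd. Qed.
Lemma CL_opp (f : T -> C) a : filterlim f F (locally a) -> filterlim (fun x => Copp (f x)) F (locally (Copp a)).
Proof. intros Hf. apply CL_intro; simpl; apply RL_opp; auto using CL_fst, CL_snd. Qed.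
Lemma CL_minus (f g : T -> C) a b : filterlim f F (locally a) -> filterlim g F (locally b) ->
  filterlim (fun x => Cminus (f x) (g x)) F (locally (Cminus a b)).
Proof. intros. apply CL_plus; auto. apply CL_opp; auto. Qed.
Lemma CL_mult (f g : T -> C) a b : filterlim f F (locally a) -> filterlim g F (locally b) ->
  filterlim (fun x => Cmult (f x) (g x)) F (locally (Cmult a b)).
Proof.
  intros Hf Hg. apply CL_intro; simpl.
  - apply RL_minus; apply RL_mult; auto using CL_fst, CL_snd.
  - apply RL_plus; apply RL_mult; auto using CL_fst, CL_snd.
Qed.
Lemma CL_const (c : C) : filterlim (fun _ => c) F (locally c).
Proof. apply filterlim_const. Qed.
Lemma CL_inv (f : T -> C) a : a <> RtoC 0 -> filterlim f F (locally a) -> filterlim (fun x => Cinv (f x)) F (locally (Cinv a)).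
Proof.
  intros Ha Hf.
  assert (Hn : fst a ^ 2 + snd a ^ 2 <> 0).
  { intro E. apply Ha. destruct a as [a1 a2]. simpl in E.
    assert (a1 = 0) by nra. assert (a2 = 0) by nra. subst. reflexivity. }
  assert (HN : filterlim (fun x => fst (f x) ^ 2 + snd (f x) ^ 2) F (locally (fst a ^ 2 + snd a ^ 2))).
  { apply (filterlim_ext (fun x => fst (f x) * (fst (f x) * 1) + snd (f x) * (snd (f x) * 1))).
    { intros; simpl; ring. }
    simpl. apply RL_plus; apply RL_mult; try apply RL_mult; auto using CL_fst, CL_snd, RL_const. }
  apply CL_intro; simpl.
  - apply RL_mult; auto using CL_fst. apply RL_inv; auto.
  - apply RL_mult. apply RL_opp; auto using CL_snd. apply RL_inv; auto.
Qed.
End S.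

Lemma filterlim_within_loc {U} (D : R -> Prop) (t : R) (g : R -> U) (G : (U -> Prop) -> Prop) :
  filterlim g (locally t) G -> filterlim g (within D (locally t)) G.
Proof. intros H P HP. specialize (H P HP). unfold filtermap, within in *. revert H. apply filter_imp. auto. Qed.

Definition Ft (T : Rbar) (t : R) := within (fun s => inI T s /\ s <> t) (locally t).
Instance Ft_filter T t : Filter (Ft T t).
Proof. apply within_filter, locally_filter. Qed.

Lemma Ft_ev_neq T t : Ft T t (fun s => s <> t).
Proof. unfold Ft, within. apply filter_forall. intros s [_ H]; auto. Qed.
Lemma Ft_ev_inI T t : Ft T t (fun s => inI T s).
Proof. unfold Ft, within. apply filter_forall. intros s [H _]; auto. Qed.

Lemma Ft_id T t : filterlim (fun s => s) (Ft T t) (locally t).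
Proof. apply filterlim_within_loc. apply filterlim_id. Qed.

Lemma Ft_RtoC_diff T t : filterlim (fun s => RtoC (s - t)) (Ft T t) (locally (RtoC 0)).
Proof.
  apply CL_intro; simpl.
  - replace 0 with (t - t) by ring. apply RL_minus. apply Ft_id. apply RL_const.
  - apply RL_const.
Qed.

Lemma D_cont T f t l : deriv_in T f t l -> filterlim f (Ft T t) (locally (f t)).
Proof.
  intros H.
  apply (filterlim_ext_loc (fun s => Cplus (f t) (Cmult (Cdiv (Cminus (f s) (f t)) (RtoC (s - t))) (RtoC (s - t))))).
  - generalize (Ft_ev_neq T t). apply filter_imp. intros s Hs. field.
    intro E. apply RtoC_inj in E. apply Hs. lra.
  - assert (H2 : filterlim (fun s => Cplus (f t) (Cmult (Cdiv (Cminus (f s) (f t)) (RtoC (s - t))) (RtoC (s - t)))) (Ft T t) (locally (Cplus (f t) (Cmult l (RtoC 0))))).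
    { apply CL_plus. apply CL_const. apply CL_mult. apply H. apply Ft_RtoC_diff. }
    replace (Cplus (f t) (Cmult l (RtoC 0))) with (f t) in H2 by ring. exact H2.
Qed.

Lemma D_ext T f g t l : (forall s, inI T s -> f s = g s) -> inI T t -> deriv_in T f t l -> deriv_in T g t l.
Proof.
  intros He Ht H. unfold deriv_in. eapply filterlim_ext_loc; [|apply H].
  generalize (Ft_ev_inI T t). apply filter_imp. intros s Hs. rewrite !He; auto.
Qed.

Lemma D_const T (c : C) t : deriv_in T (fun _ => c) t (RtoC 0).
Proof.
  unfold deriv_in. eapply filterlim_ext_loc; [|apply CL_const].
  generalize (Ft_ev_neq T t). apply filter_imp. intros s Hs. field.
  intro E. apply RtoC_inj in E. apply Hs. lra.
Qed.

Lemma D_mult T f g t l1 l2 : deriv_in T f t l1 -> deriv_in T g t l2 ->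
  deriv_in T (fun s => Cmult (f s) (g s)) t (Cplus (Cmult l1 (g t)) (Cmult (f t) l2)).
Proof.
  intros Hf Hg. unfold deriv_in.
  apply (filterlim_ext_loc (fun s => Cplus (Cmult (Cdiv (Cminus (f s) (f t)) (RtoC (s - t))) (g s)) (Cmult (f t) (Cdiv (Cminus (g s) (g t)) (RtoC (s - t)))))).
  - generalize (Ft_ev_neq T t). apply filter_imp. intros s Hs. field.
    intro E. apply RtoC_inj in E. apply Hs. lra.
  - apply CL_plus; apply CL_mult; auto using CL_const.
    apply D_cont with l2; auto. apply CL_const.
Qed.

Lemma D_inv T g t l : (forall s, inI T s -> g s <> RtoC 0) -> inI T t -> deriv_in T g t l ->
  deriv_in T (fun s => Cinv (g s)) t (Copp (Cdiv l (Cmult (g t) (g t)))).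
Proof.
  intros Hnz Ht Hg. unfold deriv_in.
  apply (filterlim_ext_loc (fun s => Copp (Cmult (Cdiv (Cminus (g s) (g t)) (RtoC (s - t))) (Cinv (Cmult (g s) (g t)))))).
  - generalize (filter_and _ _ (Ft_ev_neq T t) (Ft_ev_inI T t)). apply filter_imp. intros s [Hs Hi].
    specialize (Hnz s Hi) as H1. specialize (Hnz t Ht) as H2. field. repeat split; auto.
    intro E. apply RtoC_inj in E. apply Hs. lra.
  - apply CL_opp. apply CL_mult; auto. apply CL_inv.
    + apply Cmult_neq_0; auto.
    + apply CL_mult. apply D_cont with l; auto. apply CL_const.
Qed.

Lemma D_eq_l T f t l l' : deriv_in T f t l -> l = l' -> deriv_in T f t l'.
Proof. intros H E; subst; auto. Qed.

Lemma real_quot T (u : R -> R) t d : derivable_pt_lim u t d ->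
  filterlim (fun s => (u s - u t) / (s - t)) (Ft T t) (locally d).
Proof.
  intros H. apply filterlim_locally. intros eps. unfold Ft, within.
  destruct (H eps (cond_pos eps)) as [delta Hd]. exists delta. intros s Hs [_ Hne].
  assert (Hs' : Rabs (s - t) < delta) by exact Hs.
  assert (Hnz : s - t <> 0) by lra.
  specialize (Hd (s - t) Hnz Hs'). rewrite (Rplus_minus t s) in Hd.
  change (Rabs ((u s - u t) / (s - t) - d) < eps). exact Hd.
Qed.

Lemma D_of_real T (u v : R -> R) t d1 d2 : derivable_pt_lim u t d1 -> derivable_pt_lim v t d2 ->
  deriv_in T (fun s => (u s, v s)) t (d1, d2).
Proof.
  intros Hu Hv. unfold deriv_in. apply CL_intro; simpl fst; simpl snd.
  - eapply filterlim_ext_loc; [|apply (real_quot T u t d1 Hu)].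
    generalize (Ft_ev_neq T t). apply filter_imp. intros s Hs.
    unfold Cdiv, Cminus, Cmult, Cinv, Cplus, Copp, RtoC; simpl. field. lra.
  - eapply filterlim_ext_loc; [|apply (real_quot T v t d2 Hv)].
    generalize (Ft_ev_neq T t). apply filter_imp. intros s Hs.
    unfold Cdiv, Cminus, Cmult, Cinv, Cplus, Copp, RtoC; simpl. field. lra.
Qed.

Lemma cexp_add z w : cexp (Cplus z w) = Cmult (cexp z) (cexp w).
Proof.
  destruct z as [z1 z2], w as [w1 w2]. unfold cexp, Cplus, Cmult, Re, Im; simpl.
  rewrite exp_plus, cos_plus, sin_plus. apply injective_projections; simpl; ring.
Qed.

Lemma cexp_0 : cexp (RtoC 0) = RtoC 1.
Proof. unfold cexp, RtoC, Re, Im; simpl. rewrite exp_0, cos_0, sin_0. apply injective_projections; simpl; ring. Qed.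

Lemma cexp_nz z : cexp z <> RtoC 0.
Proof.
  unfold cexp, RtoC. intros E. injection E as E1 E2.
  pose proof (exp_pos (Re z)). pose proof (sin2_cos2 (Im z)).
  apply Rmult_integral in E1. apply Rmult_integral in E2.
  destruct E1 as [E1|E1]; [lra|]. destruct E2 as [E2|E2]; [lra|].
  unfold Rsqr in H0. rewrite E1, E2 in H0. lra.
Qed.

Lemma D_cexp T (G1 G2 : R -> R) t d1 d2 : derivable_pt_lim G1 t d1 -> derivable_pt_lim G2 t d2 ->
  deriv_in T (fun s => cexp (G1 s, G2 s)) t (Cmult (cexp (G1 t, G2 t)) (d1, d2)).
Proof.
  intros H1 H2.
  assert (He : derivable_pt_lim (comp exp G1) t (exp (G1 t) * d1)).
  { apply derivable_pt_lim_comp; auto. apply derivable_pt_lim_exp. }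
  assert (Hc : derivable_pt_lim (comp cos G2) t (- sin (G2 t) * d2)).
  { apply derivable_pt_lim_comp; auto. apply derivable_pt_lim_cos. }
  assert (Hs : derivable_pt_lim (comp sin G2) t (cos (G2 t) * d2)).
  { apply derivable_pt_lim_comp; auto. apply derivable_pt_lim_sin. }
  pose proof (derivable_pt_lim_mult _ _ _ _ _ He Hc) as A.
  pose proof (derivable_pt_lim_mult _ _ _ _ _ He Hs) as B.
  unfold mult_fct, comp in A, B.
  eapply D_eq_l. unfold cexp, Re, Im; simpl. apply (D_of_real T _ _ t _ _ A B).
  unfold cexp, Cmult, Re, Im; simpl. apply injective_projections; simpl; ring.
Qed.

Section Ext.
Variable T : Rbar.
Hypothesis HT : Rbar_lt 0 T.
Variable h : R -> R.
Hypothesis Hh : forall s, inI T s -> filterlim h (Ft T s) (locally (h s)).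

Definition hx (s : R) := h (Rmax 0 s).

Lemma hx_cont (z : R) : Rbar_lt z T -> continuous hx z.
Proof.
  intros Hz. unfold continuous. apply filterlim_locally. intros eps. unfold hx.
  destruct (Rlt_le_dec z 0) as [Hn|Hn].
  - apply (locally_open (fun u => u < 0)). apply open_lt. 2: exact Hn.
    intros x Hx. rewrite (Rmax_left 0 z) by lra. rewrite (Rmax_left 0 x) by lra. apply ball_center.
  - assert (HI : inI T z) by (unfold inI; split; [lra|exact Hz]).
    pose proof (proj1 (filterlim_locally _ _) (Hh z HI) eps) as W. unfold Ft, within in W.
    pose proof (open_Rbar_lt' z T Hz) as HL. change (locally z (fun u => Rbar_lt u T)) in HL.
    destruct (Req_dec z 0) as [Z|Z].
    + subst z. generalize (filter_and _ _ W HL). apply filter_imp. intros s [Ws Ls].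
      rewrite (Rmax_left 0 0) by lra. destruct (Rle_lt_dec s 0).
      * rewrite (Rmax_left 0 s) by lra. apply ball_center.
      * rewrite (Rmax_right 0 s) by lra. apply Ws. split; [split; [lra|auto]|lra].
    + assert (HP : locally z (fun u => 0 < u)) by (apply (locally_open (fun u => 0 < u) (fun u => 0 < u) (open_gt 0) (fun x H => H) z); lra).
      generalize (filter_and _ _ W (filter_and _ _ HL HP)). apply filter_imp. intros s [Ws [Ls Ps]].
      rewrite (Rmax_right 0 z) by lra. rewrite (Rmax_right 0 s) by lra.
      destruct (Req_dec s z) as [E|E]. { subst. apply ball_center. }
      apply Ws. split; [split; [lra|auto]|auto].
Qed.

Lemma Rbar_lt_le_trans' (z u : R) : z <= u -> Rbar_lt u T -> Rbar_lt z T.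
Proof. intros H1 H2. apply Rbar_le_lt_trans with (Finite u); auto. Qed.

Lemma hx_exRInt (u : R) : Rbar_lt u T -> ex_RInt hx 0 u.
Proof.
  intros Hu. apply (ex_RInt_continuous (V:=R_CompleteNormedModule)). intros z Hz. apply hx_cont.
  destruct (Rle_lt_dec 0 u).
  - rewrite Rmax_right in Hz by lra. apply Rbar_lt_le_trans' with u; auto; lra.
  - rewrite Rmax_left in Hz by lra. apply Rbar_lt_le_trans' with 0; auto; lra.
Qed.

Lemma h_exRInt t : inI T t -> ex_RInt h 0 t.
Proof.
  intros [H0 Ht]. apply ex_RInt_ext with hx; [|apply hx_exRInt; auto].
  intros x Hx. rewrite Rmin_left in Hx by lra. unfold hx. rewrite Rmax_right; lra.
Qed.

Lemma h_RInt t : 0 <= t -> RInt h 0 t = RInt hx 0 t.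
Proof.
  intros H0. apply RInt_ext. intros x Hx. rewrite Rmin_left in Hx by lra. unfold hx. rewrite Rmax_right; lra.
Qed.

Lemma ftc t : inI T t -> derivable_pt_lim (fun u => RInt hx 0 u) t (h t).
Proof.
  intros [H0 Ht]. apply is_derive_Reals.
  replace (h t) with (hx t) by (unfold hx; rewrite Rmax_right; lra).
  apply (is_derive_RInt (V:=R_NormedModule) hx (fun u => RInt hx 0 u) 0 t).
  - pose proof (open_Rbar_lt' t T Ht) as HL. change (locally t (fun u => Rbar_lt u T)) in HL.
    revert HL. apply filter_imp. intros u Hu. apply (RInt_correct (V:=R_CompleteNormedModule)). apply hx_exRInt; auto.
  - apply hx_cont; auto.
Qed.
End Ext.

Fixpoint csum (n : nat) (f : nat -> C) : C :=
  match n with O => RtoC 0 | S n => Cplus (csum n f) (f n) end.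

Lemma sum_n_csum (f : nat -> C) n : sum_n f n = csum (S n) f.
Proof.
  induction n.
  - rewrite sum_O. simpl. ring.
  - rewrite sum_Sn, IHn. reflexivity.
Qed.

Lemma csum_ext n (f g : nat -> C) : (forall m, (m < n)%nat -> f m = g m) -> csum n f = csum n g.
Proof. induction n; intros H; simpl; auto. rewrite IHn, H; auto. Qed.

Lemma csum_minus n (f g : nat -> C) : csum n (fun r => Cminus (f r) (g r)) = Cminus (csum n f) (csum n g).
Proof. induction n; simpl. ring. rewrite IHn. ring. Qed.

Lemma csum_shift n (f : nat -> C) : csum (S n) f = Cplus (f 0%nat) (csum n (fun j => f (S j))).
Proof. induction n. simpl. ring. simpl in *. rewrite IHn. ring. Qed.

Lemma csum_rev n : forall (f : nat -> C), csum n (fun j => f (n - 1 - j)%nat) = csum n f.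
Proof.
  induction n; intros f; auto.
  rewrite csum_shift. change (csum (S n) f) with (Cplus (csum n f) (f n)).
  rewrite (csum_ext n _ (fun j => f (n - 1 - j)%nat)) by (intros; f_equal; lia).
  rewrite IHn. replace (S n - 1 - 0)%nat with n by lia. ring.
Qed.

Lemma cprod_shift n (f : nat -> C) : cprod (S n) f = Cmult (f 0%nat) (cprod n (fun j => f (S j))).
Proof. induction n. simpl. ring. simpl in *. rewrite IHn. ring. Qed.

Lemma cprod_rev n : forall (f : nat -> C), cprod n (fun j => f (n - 1 - j)%nat) = cprod n f.
Proof.
  induction n; intros f; auto.
  rewrite cprod_shift. change (cprod (S n) f) with (Cmult (cprod n f) (f n)).
  rewrite (cprod_ext n _ (fun j => f (n - 1 - j)%nat)) by (intros; f_equal; lia).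
  rewrite IHn. replace (S n - 1 - 0)%nat with n by lia. ring.
Qed.

Lemma rhsA_rel p (x y : nat -> C) i : (1 <= p)%nat -> (forall j, y j = cprod p (fun r => x (j + r)%nat)) ->
  rhsA p x i = Cmult (x i) (Cminus (y (S i)) (back y i p)).
Proof.
  intros Hp Hy. unfold rhsA. f_equal. f_equal.
  - rewrite Hy. apply cprod_ext. intros m _. f_equal. lia.
  - unfold back at 2. destruct (Nat.leb_spec p i).
    + rewrite Hy. rewrite <- (cprod_rev p (fun r => x (i - p + r)%nat)). apply cprod_ext. intros m Hm.
      unfold back. destruct (Nat.leb_spec (S m) i); [|lia]. f_equal. lia.
    + apply (cprod_zero _ _ i); [lia|]. unfold back. destruct (Nat.leb_spec (S i) i); [lia|reflexivity].
Qed.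

Lemma key_identity (y : nat -> C) q j :
  Cplus (Cminus (sum_n (fun r => y (j + S r)%nat) q) (sum_n (fun r => back y j (S r)) q))
        (Copp (csum q (fun r => Cminus (y (S (j + r))) (back y (j + r)%nat (S q)))))
  = Cminus (y (S (j + q))) (back y (j + q)%nat (S q)).
Proof.
  rewrite !sum_n_csum, csum_minus.
  rewrite (csum_ext (S q) (fun r => back y j (S r)) (fun r => (fun r => back y (j + r)%nat (S q)) (S q - 1 - r)%nat)).
  2:{ intros m Hm. unfold back. destruct (Nat.leb_spec (S m) j); destruct (Nat.leb_spec (S q) (j + (S q - 1 - m))); try lia; auto. f_equal. lia. }
  rewrite (csum_rev (S q) (fun r => back y (j + r)%nat (S q))). simpl csum.
  rewrite (csum_ext q (fun r => y (j + S r)%nat) (fun r => y (S (j + r)))) by (intros; f_equal; lia).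
  replace (j + S q)%nat with (S (j + q)) by lia. ring.
Qed.

Definition LD T f t k := deriv_in T f t (Cmult (f t) k).

Lemma LD_mult T f g t k1 k2 : LD T f t k1 -> LD T g t k2 -> LD T (fun s => Cmult (f s) (g s)) t (Cplus k1 k2).
Proof. intros H1 H2. eapply D_eq_l. apply D_mult; eauto. ring. Qed.

Lemma LD_inv T g t k : (forall s, inI T s -> g s <> RtoC 0) -> inI T t -> LD T g t k -> LD T (fun s => Cinv (g s)) t (Copp k).
Proof. intros Hnz Ht H. eapply D_eq_l. apply D_inv; eauto. cbv beta. assert (Hg := Hnz t Ht). generalize (g t) Hg. intros u Hu. field. auto. Qed.

Lemma LD_cmul T f t k (c : C) : LD T f t k -> LD T (fun s => Cmult c (f s)) t k.
Proof. intros H. eapply D_eq_l. apply D_mult. apply D_const. apply H. cbv beta. ring. Qed.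

Lemma LD_ext T f g t k : (forall s, inI T s -> f s = g s) -> inI T t -> LD T f t k -> LD T g t k.
Proof. intros He Ht H. unfold LD. rewrite <- He by auto. eapply D_ext; eauto. Qed.

Lemma LD_cprod T t n (f : nat -> R -> C) (k : nat -> C) : (forall m, (m < n)%nat -> LD T (f m) t (k m)) ->
  LD T (fun s => cprod n (fun m => f m s)) t (csum n k).
Proof.
  induction n; intros H.
  - eapply D_eq_l. apply (D_const T (RtoC 1) t). simpl. ring.
  - simpl. apply LD_mult. apply IHn; auto. apply H; lia.
Qed.

Lemma cont_Re T (f : R -> C) : (forall s, inI T s -> exists l, deriv_in T f s l) ->
  forall s, inI T s -> filterlim (fun s => Re (f s)) (Ft T s) (locally (Re (f s))).
Proof. intros Hf s Hs. destruct (Hf s Hs) as [l Hl]. exact (CL_fst _ _ (D_cont T f s l Hl)). Qed.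
Lemma cont_Im T (f : R -> C) : (forall s, inI T s -> exists l, deriv_in T f s l) ->
  forall s, inI T s -> filterlim (fun s => Im (f s)) (Ft T s) (locally (Im (f s))).
Proof. intros Hf s Hs. destruct (Hf s Hs) as [l Hl]. exact (CL_snd _ _ (D_cont T f s l Hl)). Qed.

Lemma LD_int T (HT : Rbar_lt 0 T) (f : R -> C) (c : C) t :
  (forall s, inI T s -> exists l, deriv_in T f s l) -> inI T t ->
  LD T (fun s => Cmult c (cexp (CRInt f 0 s))) t (f t).
Proof.
  intros Hf Ht.
  pose proof (cont_Re T f Hf) as C1. pose proof (cont_Im T f Hf) as C2.
  apply LD_cmul.
  apply LD_ext with (f := fun s => cexp (RInt (hx (fun s => Re (f s))) 0 s, RInt (hx (fun s => Im (f s))) 0 s)); auto.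
  { intros s [Hs _]. unfold CRInt. rewrite <- (h_RInt (fun s => Re (f s)) s Hs), <- (h_RInt (fun s => Im (f s)) s Hs). reflexivity. }
  unfold LD. eapply D_eq_l. apply D_cexp; apply (ftc T HT); auto.
  cbv beta. f_equal. unfold Re, Im. destruct (f t); reflexivity.
Qed.

Lemma ex_RInt_csum n (fs : nat -> R -> C) (t : R) :
  (forall i, (i < n)%nat -> ex_RInt (fun s => Re (fs i s)) 0 t /\ ex_RInt (fun s => Im (fs i s)) 0 t) ->
  ex_RInt (fun s => Re (csum n (fun i => fs i s))) 0 t /\ ex_RInt (fun s => Im (csum n (fun i => fs i s))) 0 t.
Proof.
  induction n; intros H.
  - simpl. split; apply (ex_RInt_const (V:=R_NormedModule)).
  - destruct IHn as [A1 A2]. { intros; apply H; lia. } destruct (H n) as [B1 B2]; [lia|].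
    simpl. split.
    + apply (ex_RInt_plus (V:=R_NormedModule) _ _ _ _ A1 B1).
    + apply (ex_RInt_plus (V:=R_NormedModule) _ _ _ _ A2 B2).
Qed.

Lemma CRInt_csum n (fs : nat -> R -> C) (t : R) :
  (forall i, (i < n)%nat -> ex_RInt (fun s => Re (fs i s)) 0 t /\ ex_RInt (fun s => Im (fs i s)) 0 t) ->
  csum n (fun i => CRInt (fs i) 0 t) = CRInt (fun s => csum n (fun i => fs i s)) 0 t.
Proof.
  induction n; intros H.
  - unfold CRInt. simpl. rewrite (RInt_const (V:=R_CompleteNormedModule)).
    change (RtoC 0 = (scal (t - 0) 0, scal (t - 0) 0)). unfold scal; simpl. unfold mult; simpl.
    apply injective_projections; simpl; ring.
  - simpl csum. rewrite IHn by (intros; apply H; lia).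
    destruct (ex_RInt_csum n fs t) as [A1 A2]. { intros; apply H; lia. } destruct (H n) as [B1 B2]; [lia|].
    unfold CRInt. simpl.
    apply injective_projections; simpl; symmetry.
    + exact (RInt_plus (V:=R_CompleteNormedModule) _ _ _ _ A1 B1).
    + exact (RInt_plus (V:=R_CompleteNormedModule) _ _ _ _ A2 B2).
Qed.

Lemma CRInt_ext (f g : R -> C) t : (forall s, f s = g s) -> CRInt f 0 t = CRInt g 0 t.
Proof. intros H. unfold CRInt. f_equal; apply RInt_ext; intros; rewrite H; auto. Qed.

Lemma cprod_cexp n (c : nat -> C) (X : nat -> C) :
  cprod n (fun i => Cmult (c i) (cexp (X i))) = Cmult (cprod n c) (cexp (csum n X)).
Proof.
  induction n; simpl. rewrite cexp_0. ring.
  rewrite IHn, cexp_add. ring.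
Qed.

Lemma S2_diff p (y : nat -> C) l : (1 <= p)%nat -> (1 <= l)%nat ->
  Cminus (S2 p y l (l + p)) (S2 p y 1 (p + 1)) = csum (l - 1) (fun i => y (S i)).
Proof.
  intros Hp Hl. unfold S2.
  replace (l + p)%nat with ((l - 1) + 1 + p)%nat by lia. rewrite mpow2_Q by auto.
  replace (p + 1)%nat with (0 + 1 + p)%nat by lia. replace (1 - 1)%nat with 0%nat by lia. rewrite mpow2_Q by auto.
  rewrite !sum_n_csum. rewrite csum_shift. simpl. ring.
Qed.

Lemma direct_part p T : (1 <= p)%nat ->
  forall a : nat -> R -> C,
     (forall i t, inI T t -> a i t <> RtoC 0) ->
     forall t, inI T t -> forall l k : nat, (1 <= l <= p)%nat ->
       Cdiv (S1 p (fun i => a i t) l k) (S1 p (fun i => a i t) l (l - 1))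
       = S2 p (fun i => miura p a i t) l k.
Proof.
  intros Hp a Hnz t Ht l k Hl.
  assert (Hy : forall j, (fun i => miura p a i t) j = cprod p (fun r => (fun i => a i t) (j + r)%nat)) by reflexivity.
  rewrite !(S1_S2 p Hp _ _ Hy). rewrite (S2_diag p). 
  assert (HP : cprod (l - 1) (fun i => a i t) <> RtoC 0) by (apply cprod_nz; intros; apply Hnz; auto).
  field; auto. auto.
Qed.

Section Conv.
Variables (p : nat) (T : Rbar).
Hypothesis Hp : (2 <= p)%nat.
Hypothesis HT : Rbar_lt 0 T.
Variables (b : nat -> R -> C) (c : nat -> C) (a : nat -> R -> C).
Hypothesis HB : solB p T b.
Hypothesis Hbnz : forall i t, inI T t -> b i t <> RtoC 0.
Hypothesis Hc : forall i, (i <= p - 2)%nat -> c i <> RtoC 0.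
Hypothesis Ha1 : forall i t, (i <= p - 2)%nat -> inI T t ->
        a i t = Cmult (c i) (cexp (CRInt (b (S i)) 0 t)).
Hypothesis Ha2 : forall i t, (p - 1 <= i)%nat -> inI T t ->
        a i t = Cdiv (b (i - (p - 1))%nat t)
                     (cprod (p - 1) (fun j => a (i - (p - 1) + j)%nat t)).

Lemma Cdiv_nz (x y : C) : x <> RtoC 0 -> y <> RtoC 0 -> Cdiv x y <> RtoC 0.
Proof. intros Hx Hy E. apply Hx. replace x with (Cmult (Cdiv x y) y) by (field; auto). rewrite E. ring. Qed.

Lemma a_nz : forall i t, inI T t -> a i t <> RtoC 0.
Proof.
  intros i. induction i as [i IH] using (well_founded_induction Wf_nat.lt_wf). intros t Ht.
  destruct (Compare_dec.le_lt_dec i (p - 2)) as [Hi|Hi].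
  - rewrite Ha1 by auto. apply Cmult_neq_0; auto. apply cexp_nz.
  - rewrite Ha2 by (auto; lia). apply Cdiv_nz; auto. apply cprod_nz. intros m Hm. apply IH; auto. lia.
Qed.

Lemma miura_rel t : inI T t -> forall j, b j t = cprod p (fun r => a (j + r)%nat t).
Proof.
  intros Ht j. transitivity (cprod (S (p - 1)) (fun r => a (j + r)%nat t)).
  2:{ f_equal. lia. }
  simpl cprod.
  rewrite (Ha2 (j + (p - 1))) by (auto; lia).
  replace (j + (p - 1) - (p - 1))%nat with j by lia.
  field. apply cprod_nz. intros m Hm. apply a_nz; auto.
Qed.

Lemma b_deriv i : forall s, inI T s -> exists l, deriv_in T (b i) s l.
Proof. intros s Hs. eexists. apply HB; auto. Qed.

Definition beta i t := Cminus (b (S i) t) (back (fun n => b n t) i p).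

Lemma a_LD : forall i t, inI T t -> LD T (a i) t (beta i t).
Proof.
  intros i. induction i as [i IH] using (well_founded_induction Wf_nat.lt_wf). intros t Ht.
  destruct (Compare_dec.le_lt_dec i (p - 2)) as [Hi|Hi].
  - apply LD_ext with (f := fun s => Cmult (c i) (cexp (CRInt (b (S i)) 0 s))); auto.
    { intros s Hs. rewrite Ha1; auto. }
    unfold LD. eapply D_eq_l. apply (LD_int T HT (b (S i)) (c i) t (b_deriv (S i)) Ht).
    unfold beta, back. destruct (Nat.leb_spec p i); [lia|]. rewrite <- Ha1 by auto. ring.
  - set (j := (i - (p - 1))%nat).
    apply LD_ext with (f := fun s => Cmult (b j s) (Cinv (cprod (p - 1) (fun r => a (j + r)%nat s)))); auto.
    { intros s Hs. rewrite (Ha2 i) by (auto; lia). reflexivity. }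
    assert (Hb : LD T (b j) t (Cminus (sum_n (fun r => b (j + S r)%nat t) (p - 1)) (sum_n (fun r => back (fun n => b n t) j (S r)) (p - 1)))).
    { apply HB; auto. }
    assert (HPi : LD T (fun s => cprod (p - 1) (fun r => a (j + r)%nat s)) t (csum (p - 1) (fun r => beta (j + r) t))).
    { apply (LD_cprod T t (p - 1) (fun r => a (j + r)%nat) (fun r => beta (j + r) t)). intros m Hm. apply IH; auto. lia. }
    apply LD_inv in HPi; auto.
    2:{ intros s Hs. apply cprod_nz. intros m Hm. apply a_nz; auto. }
    pose proof (LD_mult T _ _ t _ _ Hb HPi) as HM.
    unfold LD. eapply D_eq_l. apply HM. cbv beta. f_equal.
    unfold beta. pose proof (key_identity (fun n => b n t) (p - 1) j) as K.
    replace (S (p - 1)) with p in K by lia. replace (j + (p - 1))%nat with i in K by lia.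
    rewrite <- K. f_equal.
Qed.

Lemma conv_solA : solA p T a.
Proof.
  intros i t Ht. rewrite (rhsA_rel p (fun n => a n t) (fun n => b n t) i) by (try lia; apply miura_rel; auto).
  apply (a_LD i t Ht).
Qed.

Lemma conv_1 : forall t, inI T t -> forall k : nat,
        S1 p (fun i => a i t) 1 k = S2 p (fun i => b i t) 1 k.
Proof.
  intros t Ht k. rewrite (S1_S2 p ltac:(lia) (fun i => a i t) (fun i => b i t)) by (apply miura_rel; auto).
  simpl. ring.
Qed.

Lemma conv_2 : forall t, inI T t -> forall l k : nat, (2 <= l <= p)%nat ->
        S1 p (fun i => a i t) l k =
        Cmult (Cmult (cprod (l - 1) c)
                     (cexp (CRInt (fun s => Cminus (S2 p (fun i => b i s) l (l + p))
                                                  (S2 p (fun i => b i s) 1 (p + 1))) 0 t)))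
              (S2 p (fun i => b i t) l k).
Proof.
  intros t Ht l k Hl.
  rewrite (S1_S2 p ltac:(lia) (fun i => a i t) (fun i => b i t)) by (apply miura_rel; auto).
  f_equal.
  rewrite (CRInt_ext _ (fun s => csum (l - 1) (fun i => b (S i) s))) by (intros; apply S2_diff; lia).
  rewrite <- CRInt_csum.
  2:{ intros i Hi. split; apply (h_exRInt T HT); auto; [apply cont_Re | apply cont_Im]; apply b_deriv. }
  rewrite <- cprod_cexp. apply cprod_ext. intros m Hm. apply Ha1; auto. lia.
Qed.
End Conv.

Theorem theorem3 (p : nat) (T : Rbar) :
  (2 <= p)%nat -> Rbar_lt 0 T ->
  (* direct part *)
  (forall a : nat -> R -> C,
     solA p T a ->
     (forall i t, inI T t -> a i t <> RtoC 0) ->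
     (forall t, inI T t -> bounded_seq (fun i => a i t)) ->
     forall t, inI T t -> forall l k : nat, (1 <= l <= p)%nat ->
       Cdiv (S1 p (fun i => a i t) l k) (S1 p (fun i => a i t) l (l - 1))
       = S2 p (fun i => miura p a i t) l k)
  /\
  (* converse part *)
  (forall (b : nat -> R -> C) (c : nat -> C) (a : nat -> R -> C),
     solB p T b ->
     (forall i t, inI T t -> b i t <> RtoC 0) ->
     (forall t, inI T t -> bounded_seq (fun i => b i t)) ->
     (forall i, (i <= p - 2)%nat -> c i <> RtoC 0) ->
     (forall i t, (i <= p - 2)%nat -> inI T t ->
        a i t = Cmult (c i) (cexp (CRInt (b (S i)) 0 t))) ->
     (forall i t, (p - 1 <= i)%nat -> inI T t ->
        a i t = Cdiv (b (i - (p - 1))%nat t)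
                     (cprod (p - 1) (fun j => a (i - (p - 1) + j)%nat t))) ->
     (forall t, inI T t -> forall k : nat,
        S1 p (fun i => a i t) 1 k = S2 p (fun i => b i t) 1 k) /\
     (forall t, inI T t -> forall l k : nat, (2 <= l <= p)%nat ->
        S1 p (fun i => a i t) l k =
        Cmult (Cmult (cprod (l - 1) c)
                     (cexp (CRInt (fun s => Cminus (S2 p (fun i => b i s) l (l + p))
                                                  (S2 p (fun i => b i s) 1 (p + 1))) 0 t)))
              (S2 p (fun i => b i t) l k)) /\
     solA p T a).
Proof.
  intros Hp HT. split.
  - intros a _ Hnz _. apply (direct_part p T ltac:(lia) a Hnz).
  - intros b c a HB Hbnz _ Hc Ha1 Ha2. split; [|split].
    + apply (conv_1 p T Hp b c a Hbnz Hc Ha1 Ha2).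
    + apply (conv_2 p T Hp HT b c a HB Hbnz Hc Ha1 Ha2).
    + apply (conv_solA p T Hp HT b c a HB Hbnz Hc Ha1 Ha2).
Qed.
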